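(* Let $p,q\ge0$ be integers and $\alpha=(\alpha_1,\dots,\alpha_p)$, $\beta=(\beta_1,\dots,\beta_q)$ real parameters, none of the $\beta_j$ equal to $0$, at least one of them a negative integer, and let $N$ be the largest absolute value of the negative integers among the $\alpha_i,\beta_j$. For $0\le n\le N$ put $c_n=\frac{(\alpha_1)_n\cdots(\alpha_p)_n}{(\beta_1)_n\cdots(\beta_q)_n\,n!}$ (assumed well defined, i.e. all denominators nonzero for $n\le N$), and fix complex numbers $s_n$ with $s_n^2=c_n$ (so $|s_n|^2=|c_n|$). Work in the $(N+1)$-dimensional Hilbert space with orthonormal basis $|0\rangle,\dots,|N\rangle$ and, for $w\in\mathbb{C}\setminus\{0\}$, define the truncated hypergeometric coherent state $|w;\alpha,\beta\rangle=\mathcal N(|w|)^{-1/2}\sum_{n=0}^{N}s_n w^n|n\rangle$, where $\mathcal N(|w|)=\sum_{n=0}^N|c_n|\,|w|^{2n}$ (which equals the truncated hypergeometric sum ${}_pF_q(\alpha,\beta;(-1)^\varsigma|w|^2)_N$, $\varsigma$ the number of negative parameters). Let $k\ge1$ be a divisor of $N+1$, $z\neq0$, and for $j=0,\dots,k-1$ let ${}_p^kF_q^j(|z|^2)_N=\sum_{n=0}^{(N+1)/k-1}|c_{nk+j}|\,|z|^{2(nk+j)}$, assumed nonzero, and define the truncated $k$-hypercat $$|z;\alpha,\beta;k,j\rangle={}_p^kF_q^j(|z|^2)_N^{-1/2}\sum_{n=0}^{(N+1)/k-1}s_{nk+j}\,z^{nk+j}\,|nk+j\rangle .$$ Then for each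 $j=0,1,\dots,k-1$, $$|z;\alpha,\beta;k,j\rangle=\frac1k\left(\frac{\mathcal N(|z|)}{{}_p^kF_q^j(|z|^2)_N}\right)^{1/2}\sum_{l=0}^{k-1}e^{-2\pi i jl/k}\,|ze^{2\pi i l/k};\alpha,\beta\rangle .$$
   Context: $(a)_n=a(a+1)\cdots(a+n-1)$, $(a)_0=1$, is the Pochhammer symbol. In the paper the coefficient $s_n$ is written as $1/\sqrt{{}_p\rho_q(n)}$ with ${}_p\rho_q(n)=n!\prod_j(\beta_j)_n/\prod_i(\alpha_i)_n$, and the normalizations use $|{}_p\rho_q(n)|$; any fixed choice of square root, used consistently on both sides, is meant. *)

(* Defs.v *)
From Stdlib Require Import Reals Arith Factorial.
From Coquelicot Require Import Coquelicot.
Open Scope R_scope.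

Fixpoint poch (a : R) (n : nat) : R :=
  match n with O => 1 | S m => poch a m * (a + INR m) end.

Fixpoint rprod (f : nat -> R) (m : nat) : R :=
  match m with O => 1 | S l => rprod f l * f l end.

Definition coef (p q : nat) (alpha beta : nat -> R) (n : nat) : R :=
  rprod (fun i => poch (alpha i) n) p /
  (rprod (fun j => poch (beta j) n) q * INR (fact n)).

Definition neg_int (x : R) : Prop := exists m : nat, (1 <= m)%nat /\ x = - INR m.

Fixpoint rsum (f : nat -> R) (m : nat) : R :=
  match m with O => 0 | S l => rsum f l + f l end.
Fixpoint csum (f : nat -> C) (m : nat) : C :=
  match m with O => RtoC 0 | S l => Cplus (csum f l) (f l) end.

(* Vectors of the (N+1)-dimensional Hilbert space: components w.r.t. the
   orthonormal basis |0>,...,|N>, as functions nat -> C (zero beyond N). *)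
Definition ket (m : nat) : nat -> C :=
  fun i => if Nat.eqb i m then RtoC 1 else RtoC 0.
Definition vscale (a : C) (v : nat -> C) : nat -> C := fun i => Cmult a (v i).
Definition vsum (f : nat -> nat -> C) (m : nat) : nat -> C :=
  fun i => csum (fun l => f l i) m.

Definition Nnorm (p q : nat) (alpha beta : nat -> R) (N : nat) (r : R) : R :=
  rsum (fun n => Rabs (coef p q alpha beta n) * r ^ (2 * n)%nat) (N + 1).

Definition hcs (p q : nat) (alpha beta : nat -> R) (N : nat) (s : nat -> C)
  (w : C) : nat -> C :=
  vscale (RtoC (/ sqrt (Nnorm p q alpha beta N (Cmod w))))
    (vsum (fun n => vscale (Cmult (s n) (Cpow w n)) (ket n)) (N + 1)%nat).

Definition Fkj (p q : nat) (alpha beta : nat -> R) (N k j : nat) (r : R) : R :=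
  rsum (fun n => Rabs (coef p q alpha beta ((n * k + j)%nat)) * r ^ (2 * (n * k + j))%nat)
    ((N + 1) / k)%nat.

Definition hypercat (p q : nat) (alpha beta : nat -> R) (N : nat) (s : nat -> C)
  (k j : nat) (z : C) : nat -> C :=
  vscale (RtoC (/ sqrt (Fkj p q alpha beta N k j (Cmod z))))
    (vsum (fun n => vscale (Cmult (s ((n * k + j)%nat)) (Cpow z ((n * k + j)%nat)))
                           (ket ((n * k + j)%nat))) ((N + 1) / k)%nat).

Definition cexpi (t : R) : C := (cos t, sin t).

(* Main.v *)
Require Import Defs.
From Stdlib Require Import Reals Lia Lra Arith ZArith FunctionalExtensionality.
From Coquelicot Require Import Coquelicot.
Open Scope R_scope.

Lemma csum_ext f g m : (forall l, (l < m)%nat -> f l = g l) -> csum f m = csum g m.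
Proof. induction m; simpl; intros H; auto. rewrite IHm by (intros; apply H; lia). rewrite H by lia; auto. Qed.

Lemma csum_scal a f m : csum (fun l => Cmult a (f l)) m = Cmult a (csum f m).
Proof. induction m; simpl. apply injective_projections; simpl; ring. rewrite IHm. ring. Qed.

Lemma csum_zero m : csum (fun _ => RtoC 0) m = RtoC 0.
Proof. induction m; simpl; auto. rewrite IHm. ring. Qed.

Lemma csum_one m : csum (fun _ => RtoC 1) m = RtoC (INR m).
Proof. induction m. reflexivity. cbn [csum]. rewrite IHm. rewrite S_INR. rewrite RtoC_plus. ring. Qed.

Lemma csum_ket f m i : csum (fun n => Cmult (f n) (ket n i)) m = if (i <? m)%nat then f i else RtoC 0.
Proof.
  induction m; simpl. destruct (Nat.ltb_spec i 0); [lia|auto].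
  rewrite IHm. unfold ket. destruct (Nat.ltb_spec i m); destruct (Nat.eqb_spec i m);
   destruct (Nat.ltb_spec i (S m)); try lia; subst; ring.
Qed.

Lemma csum_ket_k f M k j a b : (b < k)%nat -> (j < k)%nat ->
  csum (fun n => Cmult (f n) (ket (n * k + j) (k * a + b))) M =
  if andb (Nat.eqb b j) (Nat.ltb a M) then f a else RtoC 0.
Proof.
  intros Hb Hj. induction M; simpl. rewrite Bool.andb_false_r. auto.
  rewrite IHM. unfold ket.
  destruct (Nat.eqb_spec (k*a+b) (M*k+j)) as [E|E].
  - assert (a = M /\ b = j) as [-> ->].
    { assert (a = M) by (destruct (Nat.lt_total a M) as [h|[h|h]]; nia). subst; lia. }
    rewrite Nat.eqb_refl. destruct (Nat.ltb_spec M M); destruct (Nat.ltb_spec M (S M)); try lia. simpl. ring.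
  - destruct (Nat.eqb_spec b j); simpl.
    + subst. destruct (Nat.ltb_spec a M); destruct (Nat.ltb_spec a (S M)); try lia; try ring.
      assert (a = M) by lia. subst. lia.
    + ring.
Qed.

Lemma cexpi_mul a b : Cmult (cexpi a) (cexpi b) = cexpi (a + b).
Proof. unfold cexpi. rewrite cos_plus, sin_plus. apply injective_projections; simpl; ring. Qed.

Lemma cexpi_pow t n : Cpow (cexpi t) n = cexpi (INR n * t).
Proof. induction n. simpl. unfold cexpi. rewrite Rmult_0_l, cos_0, sin_0. auto.
  simpl Cpow. rewrite IHn, cexpi_mul, S_INR. f_equal. ring. Qed.

Lemma cexpi_2pi n : cexpi (2 * INR n * PI) = RtoC 1.
Proof. unfold cexpi. pose proof (cos_period 0 n). pose proof (sin_period 0 n).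
  rewrite Rplus_0_l in *. rewrite H, H0, cos_0, sin_0. auto. Qed.

Lemma cexpi_per x n : cexpi (x + 2 * INR n * PI) = cexpi x.
Proof. rewrite <- cexpi_mul, cexpi_2pi. ring. Qed.

Lemma Cmod_cexpi t : Cmod (cexpi t) = 1.
Proof. unfold Cmod, cexpi; simpl. pose proof (sin2_cos2 t). unfold Rsqr in H. replace (cos t * (cos t * 1) + sin t * (sin t * 1)) with 1 by lra. apply sqrt_1. Qed.

Lemma geom (w : C) k : Cmult (Cminus w (RtoC 1)) (csum (fun l => Cpow w l) k) = Cminus (Cpow w k) (RtoC 1).
Proof. induction k; simpl. ring. rewrite Cmult_plus_distr_l, IHk. ring. Qed.

Lemma rsum_nonneg f m : (forall n, 0 <= f n) -> 0 <= rsum f m.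
Proof. intros H; induction m; simpl. lra. specialize (H m). lra. Qed.

Lemma rsum_ge0 f m : (forall n, 0 <= f n) -> f O <= rsum f (S m).
Proof. intros H; induction m; simpl. lra. simpl in IHm. specialize (H (S m)). lra. Qed.

Lemma rprod_one m : rprod (fun _ => 1) m = 1.
Proof. induction m; simpl; auto. rewrite IHm; ring. Qed.
Lemma w_ne1 k b j : (1 <= k)%nat -> (b < k)%nat -> (j < k)%nat -> b <> j ->
  cexpi (2 * PI * (INR b - INR j) / INR k) <> RtoC 1.
Proof.
  intros Hk Hb Hj Hbj E. unfold cexpi, RtoC in E. injection E as E1 E2.
  apply sin_eq_0_0 in E2. destruct E2 as [m Hm].
  assert (Hkp : 0 < INR k) by (apply lt_0_INR; lia).
  assert (HP := PI_RGT_0).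
  assert (Hm2 : IZR m * INR k = 2 * (INR b - INR j)).
  { apply (Rmult_eq_reg_r PI); [| lra].
    replace (2 * (INR b - INR j) * PI) with (2 * PI * (INR b - INR j) / INR k * INR k) by (field; lra).
    rewrite Hm. ring. }
  rewrite !INR_IZR_INZ, <- mult_IZR, <- minus_IZR, <- mult_IZR in Hm2.
  apply eq_IZR in Hm2.
  assert (m = 1%Z \/ m = (-1)%Z) as [-> | ->] by nia.
  - rewrite Hm, Rmult_1_l, cos_PI in E1. lra.
  - rewrite Hm in E1. replace (IZR (-1) * PI) with (- PI) in E1 by (simpl; ring). rewrite cos_neg, cos_PI in E1. lra.
Qed.

Lemma rou k j a b : (1 <= k)%nat -> (b < k)%nat -> (j < k)%nat ->
  csum (fun l => Cmult (cexpi (- (2 * PI * INR j * INR l / INR k)))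
                       (Cpow (cexpi (2 * PI * INR l / INR k)) (k * a + b))) k
  = if Nat.eqb b j then RtoC (INR k) else RtoC 0.
Proof.
  intros Hk Hb Hj.
  assert (Hkp : 0 < INR k) by (apply lt_0_INR; lia).
  set (w := cexpi (2 * PI * (INR b - INR j) / INR k)).
  rewrite (csum_ext _ (fun l => Cpow w l)).
  2:{ intros l _. rewrite cexpi_pow, cexpi_mul. unfold w. rewrite cexpi_pow.
      rewrite <- (cexpi_per (INR l * _) (l * a)). f_equal. rewrite !mult_INR, plus_INR, !mult_INR. field. lra. }
  destruct (Nat.eqb_spec b j).
  - subst. unfold w. replace (2 * PI * (INR j - INR j) / INR k) with 0 by (field; lra).
    rewrite (csum_ext _ (fun _ => RtoC 1)). apply csum_one.
    intros. unfold cexpi. rewrite cos_0, sin_0. apply Cpow_1_l.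
  - assert (Hw : w <> RtoC 1) by (apply w_ne1; auto).
    assert (Hwk : Cpow w k = RtoC 1).
    { unfold w. rewrite cexpi_pow.
      replace (INR k * (2 * PI * (INR b - INR j) / INR k)) with (2 * INR b * PI + - (2 * INR j * PI)) by (field; lra).
      rewrite <- cexpi_mul, cexpi_2pi.
      assert (cexpi (- (2 * INR j * PI)) = RtoC 1).
      { rewrite <- (cexpi_per _ j). replace (- (2 * INR j * PI) + 2 * INR j * PI) with 0 by ring.
        unfold cexpi. rewrite cos_0, sin_0. auto. }
      rewrite H. ring. }
    pose proof (geom w k) as Hg. rewrite Hwk in Hg.
    assert (Hw1 : Cminus w (RtoC 1) <> RtoC 0).
    { intro E. apply Hw. replace w with (Cplus (Cminus w (RtoC 1)) (RtoC 1)) by ring. rewrite E. ring. }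
    replace (csum (fun l => Cpow w l) k) with (Cmult (Cinv (Cminus w (RtoC 1))) (Cmult (Cminus w (RtoC 1)) (csum (fun l => Cpow w l) k))) by (field; auto).
    rewrite Hg. ring.
Qed.

Theorem proposition4
  (p q : nat) (alpha beta : nat -> R) (N : nat)
  (Hbeta0 : forall j, (j < q)%nat -> beta j <> 0)
  (Hbneg : exists j, (j < q)%nat /\ neg_int (beta j))
  (HNattained : (exists i, (i < p)%nat /\ alpha i = - INR N) \/
                (exists j, (j < q)%nat /\ beta j = - INR N))
  (HNmax : (forall i, (i < p)%nat -> forall m : nat,
               neg_int (alpha i) -> alpha i = - INR m -> (m <= N)%nat) /\
           (forall j, (j < q)%nat -> forall m : nat,
               neg_int (beta j) -> beta j = - INR m -> (m <= N)%nat))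
  (Hwd : forall n, (n <= N)%nat -> rprod (fun j => poch (beta j) n) q <> 0)
  (s : nat -> C)
  (Hs : forall n, (n <= N)%nat -> Cmult (s n) (s n) = RtoC (coef p q alpha beta n))
  (k : nat) (Hk : (1 <= k)%nat) (Hdiv : Nat.divide k (N + 1))
  (z : C) (Hz : z <> RtoC 0) :
  forall j : nat, (j < k)%nat ->
    Fkj p q alpha beta N k j (Cmod z) <> 0 ->
    hypercat p q alpha beta N s k j z =
    vscale (Cmult (RtoC (/ INR k))
                  (RtoC (sqrt (Nnorm p q alpha beta N (Cmod z)
                               / Fkj p q alpha beta N k j (Cmod z)))))
      (vsum (fun l => vscale (cexpi (- (2 * PI * INR j * INR l / INR k)))
                        (hcs p q alpha beta N s
                           (Cmult z (cexpi (2 * PI * INR l / INR k))))) k).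
Proof.
  intros j Hj HF.
  set (F := Fkj p q alpha beta N k j (Cmod z)) in *.
  set (Nn := Nnorm p q alpha beta N (Cmod z)).
  assert (HFp : 0 < F).
  { assert (0 <= F). { unfold F, Fkj. apply rsum_nonneg. intros n.
      apply Rmult_le_pos. apply Rabs_pos. apply pow_le. apply Cmod_ge_0. }
    lra. }
  assert (HNp : 0 < Nn).
  { unfold Nn, Nnorm. rewrite Nat.add_1_r.
    eapply Rlt_le_trans; [| apply rsum_ge0].
    - unfold coef. cbn [poch]. rewrite !rprod_one. simpl. replace (1 / (1 * 1)) with 1 by field. rewrite Rabs_R1. lra.
    - intros n. apply Rmult_le_pos. apply Rabs_pos. apply pow_le. apply Cmod_ge_0. }
  assert (HkR : 0 < INR k) by (apply lt_0_INR; lia).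
  destruct Hdiv as [M0 HM0].
  assert (HM : ((N + 1) / k)%nat = M0) by (rewrite HM0; apply Nat.div_mul; lia).
  apply functional_extensionality; intro i.
  assert (exists a b, (b < k)%nat /\ i = (k * a + b)%nat) as [a [b [Hb ->]]].
  { exists (i / k)%nat, (i mod k)%nat. split. apply Nat.mod_upper_bound; lia. apply Nat.div_mod_eq. }
  unfold hypercat, hcs, vscale, vsum. fold F. rewrite HM.
  rewrite (csum_ket_k (fun n => Cmult (s (n * k + j)%nat) (Cpow z (n * k + j))) M0 k j a b Hb Hj).
  rewrite (csum_ext _ (fun l => Cmult (cexpi (- (2 * PI * INR j * INR l / INR k)))
      (Cmult (RtoC (/ sqrt Nn)) (if ((k * a + b) <? N + 1)%nat then
         Cmult (s (k * a + b)%nat) (Cmult (Cpow z (k * a + b)) (Cpow (cexpi (2 * PI * INR l / INR k)) (k * a + b))) else RtoC 0)))).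
  2:{ intros l _. rewrite csum_ket. rewrite Cmod_mult, Cmod_cexpi, Rmult_1_r. fold Nn.
      destruct (_ <? _)%nat; auto. rewrite Cpow_mult_l. auto. }
  assert (HMk : (N + 1 = M0 * k)%nat) by exact HM0.
  destruct (Nat.ltb_spec (k * a + b) (N + 1)) as [Hlt|Hge].
  - rewrite (csum_ext _ (fun l => Cmult (Cmult (RtoC (/ sqrt Nn)) (Cmult (s (k * a + b)%nat) (Cpow z (k * a + b))))
        (Cmult (cexpi (- (2 * PI * INR j * INR l / INR k))) (Cpow (cexpi (2 * PI * INR l / INR k)) (k * a + b))))).
    2:{ intros l _. ring. }
    rewrite csum_scal, rou by auto.
    destruct (Nat.eqb_spec b j) as [<-|Hbj]; simpl.
    + destruct (Nat.ltb_spec a M0); [| nia]. simpl.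
      replace (a * k + b)%nat with (k * a + b)%nat by lia.
      assert (Hr : / INR k * sqrt (Nn / F) * / sqrt Nn * INR k = / sqrt F).
      { rewrite sqrt_div_alt by auto.
        assert (0 < sqrt Nn) by (apply sqrt_lt_R0; auto).
        assert (0 < sqrt F) by (apply sqrt_lt_R0; auto).
        field. lra. }
      rewrite <- Hr. rewrite !RtoC_mult. ring.
    + ring.
  - rewrite (csum_ext _ (fun _ => RtoC 0)) by (intros; ring).
    rewrite csum_zero.
    destruct (Nat.eqb_spec b j) as [<-|Hbj]; simpl; [| ring].
    destruct (Nat.ltb_spec a M0); [nia|]. simpl. ring.
Qed.
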